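(* Let $c\in V$ be tight and let $x_1,x_2\ge 0$. Then (1) $\operatorname{proj}_X(\operatorname{proj}_X(c,x_1),x_2)=\operatorname{proj}_X(c,\min\{x_1,x_2\})$, and (2) $\operatorname{shrink}_X(\operatorname{shrink}_X(c,x_1),x_2)=\operatorname{shrink}_X(c,x_1+x_2)$.
   Context: $V$ is a finite dimensional real vector space with a positive definite symmetric bilinear form $\langle\cdot,\cdot\rangle$, $\|v\|_2=\sqrt{\langle v,v\rangle}$; $\|\cdot\|_X$ is a norm on $V$ with dual norm $\|v\|_Y=\max\{\langle v,w\rangle:\|w\|_X=1\}$. For $x\ge0$, $B_X(x)=\{v:\|v\|_X\le x\}$, $\operatorname{proj}_X(c,x)$ is the unique point of $B_X(x)$ closest to $c$ in $\|\cdot\|_2$, and $\operatorname{shrink}_X(c,x)=c-\operatorname{proj}_X(c,x)$. For norms $\|\cdot\|_P,\|\cdot\|_Q$ (among $X,Y,2$), $c=a+b$ is a $PQ$-decomposition if for every decomposition $c=a'+b'$: $\|a'\|_P>\|a\|_P$, or $\|b'\|_Q>\|b\|_Q$, or $(\|a'\|_P,\|b'\|_Q)=(\|a\|_P,\|b\|_Q)$. The vector $c$ is tight if every $X2$-decomposition of $c$ is an $XY$-decomposition. *)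

(* Defs.v *)
(* classical reals. V is modelled as R^n = (Fin.t n -> R),
   with an ARBITRARY positive definite symmetric bilinear form ip and an
   ARBITRARY norm nX on it. *)
From Stdlib Require Fin.
From Stdlib Require Import Reals FunctionalExtensionality ClassicalEpsilon.
Open Scope R_scope.

Definition vec (n : nat) := Fin.t n -> R.

Definition vadd {n} (u v : vec n) : vec n := fun i => u i + v i.
Definition vsub {n} (u v : vec n) : vec n := fun i => u i - v i.
Definition vscale {n} (a : R) (u : vec n) : vec n := fun i => a * u i.
Definition vzero {n} : vec n := fun _ => 0.

Definition is_inner_product {n} (ip : vec n -> vec n -> R) : Prop :=
  (forall u v, ip u v = ip v u) /\
  (forall u v w, ip (vadd u v) w = ip u w + ip v w) /\
  (forall a u w, ip (vscale a u) w = a * ip u w) /\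
  (forall v, v <> vzero -> 0 < ip v v).

Definition is_norm {n} (N : vec n -> R) : Prop :=
  (forall v, N v = 0 -> v = vzero) /\
  (forall a v, N (vscale a v) = Rabs a * N v) /\
  (forall u v, N (vadd u v) <= N u + N v).

Definition norm2 {n} (ip : vec n -> vec n -> R) (v : vec n) : R := sqrt (ip v v).

Definition dualnorm {n} (ip : vec n -> vec n -> R) (nX : vec n -> R) (v : vec n) : R :=
  epsilon (inhabits 0%R)
    (fun y => (exists w, nX w = 1 /\ ip v w = y) /\
              (forall w, nX w = 1 -> ip v w <= y)).

Definition projX {n} (ip : vec n -> vec n -> R) (nX : vec n -> R) (c : vec n) (x : R) : vec n :=
  epsilon (inhabits vzero)
    (fun p => nX p <= x /\
              forall q, nX q <= x -> norm2 ip (vsub c p) <= norm2 ip (vsub c q)).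

Definition shrinkX {n} (ip : vec n -> vec n -> R) (nX : vec n -> R) (c : vec n) (x : R) : vec n :=
  vsub c (projX ip nX c x).

Definition is_decomp {n} (P Q : vec n -> R) (c a b : vec n) : Prop :=
  vadd a b = c /\
  forall a' b', vadd a' b' = c ->
    P a' > P a \/ Q b' > Q b \/ (P a' = P a /\ Q b' = Q b).

Definition tight {n} (ip : vec n -> vec n -> R) (nX : vec n -> R) (c : vec n) : Prop :=
  forall a b, is_decomp nX (norm2 ip) c a b -> is_decomp nX (dualnorm ip nX) c a b.

(* Main.v *)
Require Import Defs.
From Stdlib Require Import Reals Lra Lia Psatz FunctionalExtensionality ClassicalEpsilon Classical.
Open Scope R_scope.

Lemma Rabs_le_inv' x y : Rabs x <= y -> - y <= x /\ x <= y.
Proof. unfold Rabs; destruct (Rcase_abs x); intros; split; lra. Qed.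

Fixpoint sumf (m : nat) : (Fin.t m -> R) -> R :=
  match m with
  | O => fun _ => 0
  | S k => fun g => g Fin.F1 + sumf k (fun i => g (Fin.FS i))
  end.

Lemma sumf_ext m (f g : Fin.t m -> R) : (forall i, f i = g i) -> sumf m f = sumf m g.
Proof.
  revert f g; induction m; intros f g H; simpl; auto.
  rewrite H. f_equal. apply IHm. intros; apply H.
Qed.

Lemma sumf_le m (f g : Fin.t m -> R) : (forall i, f i <= g i) -> sumf m f <= sumf m g.
Proof.
  revert f g; induction m; intros f g H; simpl; [lra|].
  specialize (IHm (fun i => f (Fin.FS i)) (fun i => g (Fin.FS i)) (fun i => H (Fin.FS i))).
  specialize (H Fin.F1). lra.
Qed.

Lemma sumf_zero m : sumf m (fun _ => 0) = 0.
Proof. induction m; simpl; auto. rewrite IHm; ring. Qed.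

Lemma sumf_nonneg m (f : Fin.t m -> R) : (forall i, 0 <= f i) -> 0 <= sumf m f.
Proof.
  intros H. rewrite <- (sumf_zero m). apply sumf_le; auto.
Qed.

Lemma sumf_plus m (f g : Fin.t m -> R) : sumf m (fun i => f i + g i) = sumf m f + sumf m g.
Proof.
  revert f g; induction m; intros f g; simpl; [ring|].
  rewrite IHm. ring.
Qed.

Lemma sumf_scal m c (f : Fin.t m -> R) : sumf m (fun i => c * f i) = c * sumf m f.
Proof.
  revert f; induction m; intros f; simpl; [ring|].
  rewrite IHm. ring.
Qed.

Lemma sumf_const_le m (f : Fin.t m -> R) d : (forall i, f i <= d) -> sumf m f <= INR m * d.
Proof.
  revert f; induction m; intros f H; cbn [sumf]; [simpl; lra|].
  specialize (IHm (fun i => f (Fin.FS i)) (fun i => H (Fin.FS i))).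
  specialize (H Fin.F1). rewrite S_INR. lra.
Qed.

Lemma sumf_abs m (f : Fin.t m -> R) : Rabs (sumf m f) <= sumf m (fun i => Rabs (f i)).
Proof.
  revert f; induction m; intros f; simpl.
  - rewrite Rabs_R0; lra.
  - eapply Rle_trans; [apply Rabs_triang|]. specialize (IHm (fun i => f (Fin.FS i))). lra.
Qed.

Lemma term_le_sumf m (f : Fin.t m -> R) i : (forall j, 0 <= f j) -> f i <= sumf m f.
Proof.
  revert f i; induction m; intros f i H.
  - inversion i.
  - simpl. pattern i; apply Fin.caseS'.
    + pose proof (sumf_nonneg m (fun j => f (Fin.FS j)) (fun j => H (Fin.FS j))). lra.
    + intros p. specialize (IHm (fun j => f (Fin.FS j)) p (fun j => H (Fin.FS j))).
      specialize (H Fin.F1). simpl in IHm. lra.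
Qed.

Definition ebas {n} (i : Fin.t n) : vec n := fun j => if Fin.eq_dec i j then 1 else 0.

Lemma expand_coord m (v : Fin.t m -> R) j :
  sumf m (fun i => v i * (if Fin.eq_dec i j then 1 else 0)) = v j.
Proof.
  revert v j; induction m; intros v j.
  - inversion j.
  - simpl. pattern j; apply Fin.caseS'.
    + destruct (Fin.eq_dec Fin.F1 Fin.F1) as [_|C]; [|congruence].
      rewrite (sumf_ext m _ (fun _ => 0)); [rewrite sumf_zero; ring|].
      intros i. destruct (Fin.eq_dec (Fin.FS i) Fin.F1) as [E|_]; [discriminate E|ring].
    + intros p. destruct (Fin.eq_dec Fin.F1 (Fin.FS p)) as [E|_]; [discriminate E|].
      rewrite (sumf_ext m _ (fun i => v (Fin.FS i) * (if Fin.eq_dec i p then 1 else 0))).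
      * rewrite IHm. ring.
      * intros i. destruct (Fin.eq_dec (Fin.FS i) (Fin.FS p)) as [E|E];
        destruct (Fin.eq_dec i p) as [E'|E']; auto.
        -- apply Fin.FS_inj in E. congruence.
        -- subst. congruence.
Qed.

Definition vsumv {n} m (g : Fin.t m -> vec n) : vec n := fun j => sumf m (fun i => g i j).

Lemma vext {n} (u v : vec n) : (forall i, u i = v i) -> u = v.
Proof. intros H; apply functional_extensionality; auto. Qed.

Lemma vec_expand {n} (v : vec n) : v = vsumv n (fun i => vscale (v i) (ebas i)).
Proof.
  apply vext; intros j. unfold vsumv, vscale, ebas. rewrite expand_coord. reflexivity.
Qed.

Lemma vec0_eq (u v : vec 0) : u = v.
Proof. apply vext; intros i; inversion i. Qed.

Section Geo.
Variable n : nat.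
Variable ip : vec n -> vec n -> R.
Variable nX : vec n -> R.
Hypothesis Hip : is_inner_product ip.
Hypothesis HX : is_norm nX.

Lemma ip_sym u v : ip u v = ip v u.
Proof. destruct Hip as [H _]; apply H. Qed.
Lemma ip_addl u v w : ip (vadd u v) w = ip u w + ip v w.
Proof. destruct Hip as [_ [H _]]; apply H. Qed.
Lemma ip_scalel a u w : ip (vscale a u) w = a * ip u w.
Proof. destruct Hip as [_ [_ [H _]]]; apply H. Qed.
Lemma ip_addr u v w : ip u (vadd v w) = ip u v + ip u w.
Proof. rewrite ip_sym, ip_addl, (ip_sym v), (ip_sym w); ring. Qed.
Lemma ip_scaler a u w : ip u (vscale a w) = a * ip u w.
Proof. rewrite ip_sym, ip_scalel, ip_sym; ring. Qed.

Lemma vsub_eq (u v : vec n) : vsub u v = vadd u (vscale (-1) v).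
Proof. apply vext; intros i; unfold vsub, vadd, vscale; ring. Qed.

Lemma ip_subl u v w : ip (vsub u v) w = ip u w - ip v w.
Proof. rewrite vsub_eq, ip_addl, ip_scalel; ring. Qed.
Lemma ip_subr u v w : ip u (vsub v w) = ip u v - ip u w.
Proof. rewrite ip_sym, ip_subl, (ip_sym v), (ip_sym w); ring. Qed.
Lemma ip_zerol w : ip vzero w = 0.
Proof.
  replace (@vzero n) with (vscale 0 (@vzero n)) by (apply vext; intros; unfold vscale, vzero; ring).
  rewrite ip_scalel; ring.
Qed.
Lemma ip_zeror w : ip w vzero = 0.
Proof. rewrite ip_sym; apply ip_zerol. Qed.

Lemma Rabs_m1 : Rabs (-1) = 1.
Proof. unfold Rabs; destruct (Rcase_abs (-1)); lra. Qed.

Definition Qf (v : vec n) := ip v v.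

Lemma Q_pos v : v <> vzero -> 0 < Qf v.
Proof. destruct Hip as [_ [_ [_ H]]]; apply H. Qed.
Lemma Q_nonneg v : 0 <= Qf v.
Proof.
  destruct (classic (v = vzero)) as [E|E].
  - subst. unfold Qf. rewrite ip_zerol. lra.
  - left; apply Q_pos; auto.
Qed.
Lemma Q_eq0 v : Qf v <= 0 -> v = vzero.
Proof.
  intros H. destruct (classic (v = vzero)) as [E|E]; auto.
  pose proof (Q_pos v E). lra.
Qed.
Lemma Q_zero : Qf vzero = 0.
Proof. unfold Qf; apply ip_zerol. Qed.

Lemma Q_add u v : Qf (vadd u v) = Qf u + 2 * ip u v + Qf v.
Proof. unfold Qf. rewrite ip_addl, !ip_addr, (ip_sym v u). ring. Qed.
Lemma Q_sub u v : Qf (vsub u v) = Qf u - 2 * ip u v + Qf v.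
Proof. unfold Qf. rewrite ip_subl, !ip_subr, (ip_sym v u). ring. Qed.
Lemma Q_scale a v : Qf (vscale a v) = a * a * Qf v.
Proof. unfold Qf. rewrite ip_scalel, ip_scaler. ring. Qed.

Lemma norm2_le u v : Qf u <= Qf v -> norm2 ip u <= norm2 ip v.
Proof. intros H; unfold norm2; apply sqrt_le_1_alt; exact H. Qed.
Lemma norm2_le_inv u v : norm2 ip u <= norm2 ip v -> Qf u <= Qf v.
Proof. intros H; apply sqrt_le_0; auto; apply Q_nonneg. Qed.

Lemma N_eq0 v : nX v = 0 -> v = vzero.
Proof. destruct HX as [H _]; apply H. Qed.
Lemma N_scale a v : nX (vscale a v) = Rabs a * nX v.
Proof. destruct HX as [_ [H _]]; apply H. Qed.
Lemma N_add u v : nX (vadd u v) <= nX u + nX v.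
Proof. destruct HX as [_ [_ H]]; apply H. Qed.
Lemma N_zero : nX vzero = 0.
Proof.
  replace (@vzero n) with (vscale 0 (@vzero n)) by (apply vext; intros; unfold vscale, vzero; ring).
  rewrite N_scale, Rabs_R0; ring.
Qed.
Lemma N_nonneg v : 0 <= nX v.
Proof.
  assert (E : vadd v (vscale (-1) v) = vzero) by (apply vext; intros; unfold vadd, vscale, vzero; ring).
  pose proof (N_add v (vscale (-1) v)). rewrite E, N_zero, N_scale in H.
  rewrite Rabs_m1 in H. lra.
Qed.
Lemma N_opp v : nX (vscale (-1) v) = nX v.
Proof. rewrite N_scale, Rabs_m1; ring. Qed.
Lemma N_sub u v : nX (vsub u v) <= nX u + nX v.
Proof. rewrite vsub_eq. eapply Rle_trans; [apply N_add|]. rewrite N_opp; lra. Qed.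
Lemma N_sub_ge u v : nX u - nX v <= nX (vsub u v).
Proof.
  assert (E : u = vadd (vsub u v) v) by (apply vext; intros; unfold vadd, vsub; ring).
  pose proof (N_add (vsub u v) v). rewrite <- E in H. lra.
Qed.
Lemma N_sub_sym u v : nX (vsub u v) = nX (vsub v u).
Proof.
  replace (vsub u v) with (vscale (-1) (vsub v u)) by (apply vext; intros; unfold vscale, vsub; ring).
  apply N_opp.
Qed.
Lemma N_scale_nonneg a v : 0 <= a -> nX (vscale a v) = a * nX v.
Proof. intros; rewrite N_scale, Rabs_pos_eq; auto. Qed.

Lemma lin_vsumv (L : vec n -> R) :
  (forall u v, L (vadd u v) = L u + L v) -> (forall a u, L (vscale a u) = a * L u) ->
  forall m (g : Fin.t m -> vec n), L (vsumv m g) = sumf m (fun i => L (g i)).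
Proof.
  intros Ladd Lsc. induction m; intros g.
  - replace (vsumv 0 g) with (vscale 0 (@vzero n)) by (apply vext; intros; unfold vsumv, vscale; simpl; ring).
    rewrite Lsc. simpl; ring.
  - replace (vsumv (S m) g) with (vadd (g Fin.F1) (vsumv m (fun i => g (Fin.FS i))))
      by (apply vext; intros; unfold vsumv, vadd; simpl; ring).
    rewrite Ladd, IHm. reflexivity.
Qed.

Lemma lin_expand (L : vec n -> R) :
  (forall u v, L (vadd u v) = L u + L v) -> (forall a u, L (vscale a u) = a * L u) ->
  forall v, L v = sumf n (fun i => v i * L (ebas i)).
Proof.
  intros Ladd Lsc v. rewrite (vec_expand v) at 1. rewrite (lin_vsumv L Ladd Lsc).
  apply sumf_ext; intros i. rewrite Lsc. reflexivity.
Qed.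

Lemma N_vsumv m (g : Fin.t m -> vec n) : nX (vsumv m g) <= sumf m (fun i => nX (g i)).
Proof.
  induction m.
  - replace (vsumv 0 g) with (@vzero n) by (apply vext; intros; unfold vsumv, vzero; simpl; ring).
    rewrite N_zero; simpl; lra.
  - replace (vsumv (S m) g) with (vadd (g Fin.F1) (vsumv m (fun i => g (Fin.FS i))))
      by (apply vext; intros; unfold vsumv, vadd; simpl; ring).
    eapply Rle_trans; [apply N_add|]. simpl. specialize (IHm (fun i => g (Fin.FS i))). lra.
Qed.

Definition s1 (v : vec n) := sumf n (fun i => Rabs (v i)).

Lemma s1_nonneg v : 0 <= s1 v.
Proof. apply sumf_nonneg; intros; apply Rabs_pos. Qed.
Lemma coord_le_s1 v i : Rabs (v i) <= s1 v.
Proof. apply (term_le_sumf n (fun j => Rabs (v j))); intros; apply Rabs_pos. Qed.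
Lemma s1_scale a v : s1 (vscale a v) = Rabs a * s1 v.
Proof. unfold s1, vscale. rewrite <- sumf_scal. apply sumf_ext; intros; apply Rabs_mult. Qed.
Lemma s1_add u v : s1 (vadd u v) <= s1 u + s1 v.
Proof. unfold s1, vadd. rewrite <- sumf_plus. apply sumf_le; intros; apply Rabs_triang. Qed.
Lemma s1_sub_sym u v : s1 (vsub u v) = s1 (vsub v u).
Proof. unfold s1, vsub. apply sumf_ext; intros; apply Rabs_minus_sym. Qed.
Lemma s1_close v w d : (forall i, Rabs (v i - w i) < d) -> s1 (vsub v w) <= INR n * d.
Proof. intros H. apply sumf_const_le. intros i. unfold vsub. left; apply H. Qed.
Lemma s1_eq0 v : s1 v = 0 -> v = vzero.
Proof.
  intros H. apply vext; intros i. unfold vzero.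
  pose proof (coord_le_s1 v i). pose proof (Rabs_pos (v i)).
  assert (Rabs (v i) = 0) by lra. destruct (Req_dec (v i) 0) as [E|E]; auto. apply Rabs_no_R0 in E. lra.
Qed.

Definition CN := sumf n (fun i => nX (ebas i)).
Lemma CN_nonneg : 0 <= CN.
Proof. apply sumf_nonneg; intros; apply N_nonneg. Qed.

Lemma N_le_s1 v : nX v <= CN * s1 v.
Proof.
  rewrite (vec_expand v) at 1. eapply Rle_trans; [apply N_vsumv|].
  unfold CN. rewrite Rmult_comm, <- sumf_scal. apply sumf_le. intros i.
  rewrite N_scale. apply Rmult_le_compat_r; [apply N_nonneg|apply coord_le_s1].
Qed.

Definition Bip := sumf n (fun i => sumf n (fun j => Rabs (ip (ebas i) (ebas j)))).

Lemma abs_lin_bound (L : vec n -> R) :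
  (forall u v, L (vadd u v) = L u + L v) -> (forall a u, L (vscale a u) = a * L u) ->
  forall v, Rabs (L v) <= s1 v * sumf n (fun i => Rabs (L (ebas i))).
Proof.
  intros Ladd Lsc v. rewrite (lin_expand L Ladd Lsc v).
  eapply Rle_trans; [apply sumf_abs|]. rewrite <- sumf_scal. apply sumf_le; intros i.
  rewrite Rabs_mult. apply Rmult_le_compat_r; [apply Rabs_pos|apply coord_le_s1].
Qed.

Lemma ip_bound u w : Rabs (ip u w) <= Bip * s1 u * s1 w.
Proof.
  eapply Rle_trans.
  - apply (abs_lin_bound (fun x => ip x w)); intros; [apply ip_addl|apply ip_scalel].
  - assert (H : sumf n (fun i => Rabs (ip (ebas i) w)) <= s1 w * Bip).
    { unfold Bip. rewrite <- sumf_scal. apply sumf_le; intros i.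
      eapply Rle_trans.
      - apply (abs_lin_bound (fun x => ip (ebas i) x)); intros; [apply ip_addr|apply ip_scaler].
      - right; reflexivity. }
    pose proof (s1_nonneg u). pose proof (s1_nonneg w).
    apply Rmult_le_compat_l with (r := s1 u) in H; auto. nra.
Qed.

Lemma Bip_nonneg : 0 <= Bip.
Proof. apply sumf_nonneg; intros; apply sumf_nonneg; intros; apply Rabs_pos. Qed.

Hypothesis EVT : forall (f : vec n -> R) (A : vec n -> Prop),
  (exists a, A a) ->
  (exists M, forall v, A v -> forall i, Rabs (v i) <= M) ->
  (forall v, (forall eps, 0 < eps -> exists w, A w /\ forall i, Rabs (v i - w i) < eps) -> A v) ->
  (forall v eps, 0 < eps -> exists delta, 0 < delta /\ forall w, (forall i, Rabs (v i - w i) < delta) -> Rabs (f v - f w) < eps) ->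
  exists a, A a /\ forall v, A v -> f a <= f v.

Variable i0 : Fin.t n.

Lemma small_le a b K : 0 <= K -> (forall eps, 0 < eps -> a <= b + K * eps) -> a <= b.
Proof.
  intros HK H. destruct (Rle_lt_dec a b) as [|Hlt]; auto.
  specialize (H ((a - b) / (2 * (K + 1)))).
  assert (0 < (a - b) / (2 * (K + 1))) by (apply Rdiv_lt_0_compat; lra).
  specialize (H H0).
  assert (K * ((a - b) / (2 * (K + 1))) < a - b).
  { unfold Rdiv. rewrite <- Rmult_assoc.
    apply Rmult_lt_reg_r with (r := 2 * (K + 1)); [lra|].
    rewrite Rmult_assoc, Rinv_l by lra. nra. }
  lra.
Qed.

Lemma N_cont v eps : 0 < eps -> exists delta, 0 < delta /\
  forall w, (forall i, Rabs (v i - w i) < delta) -> Rabs (nX v - nX w) < eps.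
Proof.
  intros He. exists (eps / (CN * INR n + 1)). split.
  - apply Rdiv_lt_0_compat; auto. pose proof CN_nonneg. pose proof (pos_INR n). nra.
  - intros w Hw. apply s1_close in Hw.
    assert (H1 : Rabs (nX v - nX w) <= nX (vsub v w)).
    { apply Rabs_le. pose proof (N_sub_ge v w). pose proof (N_sub_ge w v). rewrite N_sub_sym in H0. split; lra. }
    pose proof (N_le_s1 (vsub v w)). pose proof CN_nonneg. pose proof (pos_INR n).
    assert (CN * s1 (vsub v w) <= CN * (INR n * (eps / (CN * INR n + 1)))) by (apply Rmult_le_compat_l; auto).
    assert (CN * (INR n * (eps / (CN * INR n + 1))) < eps).
    { unfold Rdiv. replace (CN * (INR n * (eps * / (CN * INR n + 1)))) with (eps * ((CN * INR n) / (CN * INR n + 1))) by (field; nra).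
      assert ((CN * INR n) / (CN * INR n + 1) < 1).
      { apply Rmult_lt_reg_r with (r := CN * INR n + 1); [nra|]. unfold Rdiv. rewrite Rmult_assoc, Rinv_l by nra. nra. }
      nra. }
    lra.
Qed.

Lemma closed_N_le x : forall v, (forall eps, 0 < eps -> exists w, nX w <= x /\ forall i, Rabs (v i - w i) < eps) -> nX v <= x.
Proof.
  intros v H. apply (small_le _ _ 1); [lra|]. intros eps He.
  destruct (N_cont v eps He) as [d [Hd Hd']].
  destruct (H d Hd) as [w [Hw Hvw]]. specialize (Hd' w Hvw).
  apply Rabs_def2 in Hd'. lra.
Qed.

Lemma closed_N_eq x : forall v, (forall eps, 0 < eps -> exists w, nX w = x /\ forall i, Rabs (v i - w i) < eps) -> nX v = x.
Proof.
  intros v H. apply Rle_antisym.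
  - apply (small_le _ _ 1); [lra|]. intros eps He.
    destruct (N_cont v eps He) as [d [Hd Hd']].
    destruct (H d Hd) as [w [Hw Hvw]]. specialize (Hd' w Hvw).
    apply Rabs_def2 in Hd'. lra.
  - apply (small_le _ _ 1); [lra|]. intros eps He.
    destruct (N_cont v eps He) as [d [Hd Hd']].
    destruct (H d Hd) as [w [Hw Hvw]]. specialize (Hd' w Hvw).
    apply Rabs_def2 in Hd'. lra.
Qed.

Lemma ebas_nz : ebas i0 <> vzero.
Proof.
  intros E. assert (ebas i0 i0 = vzero i0) by (rewrite E; auto).
  unfold ebas, vzero in H. destruct (Fin.eq_dec i0 i0); [lra|congruence].
Qed.

Lemma s1_lip v w : Rabs (s1 v - s1 w) <= s1 (vsub v w).
Proof.
  assert (E1 : v = vadd (vsub v w) w) by (apply vext; intros; unfold vadd, vsub; ring).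
  assert (E2 : w = vadd (vsub w v) v) by (apply vext; intros; unfold vadd, vsub; ring).
  pose proof (s1_add (vsub v w) w). pose proof (s1_add (vsub w v) v).
  rewrite <- E1 in H. rewrite <- E2 in H0. rewrite s1_sub_sym in H0.
  apply Rabs_le; lra.
Qed.

Lemma norm_equiv : exists m, 0 < m /\ forall v, m * s1 v <= nX v.
Proof.
  destruct (EVT nX (fun v => s1 v = 1)) as [v0 [Hv0 Hmin]].
  - exists (vscale (/ s1 (ebas i0)) (ebas i0)).
    assert (0 < s1 (ebas i0)).
    { destruct (s1_nonneg (ebas i0)) as [|E]; auto. symmetry in E. apply s1_eq0 in E. exfalso; apply ebas_nz; auto. }
    rewrite s1_scale, Rabs_pos_eq by (left; apply Rinv_0_lt_compat; auto). field. lra.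
  - exists 1. intros v Hv i. rewrite <- Hv. apply coord_le_s1.
  - intros v H. pose proof (pos_INR n).
    assert (forall eps, 0 < eps -> Rabs (s1 v - 1) <= INR n * eps).
    { intros eps He. destruct (H eps He) as [w [Hw Hvw]]. rewrite <- Hw.
      eapply Rle_trans; [apply s1_lip|]. apply s1_close; auto. }
    apply Rle_antisym; apply (small_le _ _ (INR n)); auto; intros eps He; specialize (H1 eps He);
      apply Rabs_le_inv' in H1; destruct H1; lra.
  - intros; apply N_cont; auto.
  - exists (nX v0). assert (v0 <> vzero).
    { intros E. subst. unfold s1, vzero in Hv0. rewrite (sumf_ext _ _ (fun _ => 0)) in Hv0.
      - rewrite sumf_zero in Hv0. lra.
      - intros; apply Rabs_R0. }
    split.
    + destruct (N_nonneg v0) as [|E]; auto. symmetry in E. apply N_eq0 in E. contradiction.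
    + intros v. destruct (s1_nonneg v) as [Hp|E].
      * assert (Hs : s1 (vscale (/ s1 v) v) = 1).
        { rewrite s1_scale, Rabs_pos_eq by (left; apply Rinv_0_lt_compat; auto). field. lra. }
        specialize (Hmin _ Hs). rewrite N_scale, Rabs_pos_eq in Hmin by (left; apply Rinv_0_lt_compat; auto).
        apply Rmult_le_compat_l with (r := s1 v) in Hmin; [|lra].
        rewrite <- Rmult_assoc, Rinv_r in Hmin by lra. lra.
      * rewrite <- E. pose proof (N_nonneg v). lra.
Qed.

Definition mX : R := proj1_sig (constructive_indefinite_description _ norm_equiv).
Lemma mX_pos : 0 < mX.
Proof. unfold mX; destruct (constructive_indefinite_description _ _) as [m Hm]; simpl; destruct Hm as [H _]; auto. Qed.
Lemma mX_spec v : mX * s1 v <= nX v.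
Proof. unfold mX; destruct (constructive_indefinite_description _ _) as [m Hm]; simpl; destruct Hm as [_ H]; auto. Qed.

Lemma s1_le_N v : s1 v <= nX v / mX.
Proof.
  pose proof mX_pos. pose proof (mX_spec v). unfold Rdiv.
  apply Rmult_le_reg_l with (r := mX); auto. replace (mX * (nX v * / mX)) with (nX v) by (field; lra). lra.
Qed.

Definition KQ := Bip / (mX * mX).
Lemma KQ_nonneg : 0 <= KQ.
Proof. unfold KQ. pose proof mX_pos. pose proof Bip_nonneg. apply Rmult_le_pos; auto. left; apply Rinv_0_lt_compat; nra. Qed.

Lemma Q_le_N v : Qf v <= KQ * (nX v * nX v).
Proof.
  unfold Qf. pose proof (ip_bound v v). pose proof (Rle_abs (ip v v)).
  pose proof (s1_le_N v). pose proof (s1_nonneg v). pose proof Bip_nonneg. pose proof mX_pos.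
  assert (s1 v * s1 v <= (nX v / mX) * (nX v / mX)) by (apply Rmult_le_compat; auto).
  assert (Bip * s1 v * s1 v <= KQ * (nX v * nX v)).
  { unfold KQ. replace (Bip / (mX * mX) * (nX v * nX v)) with (Bip * ((nX v / mX) * (nX v / mX))) by (field; lra).
    rewrite Rmult_assoc. apply Rmult_le_compat_l; auto. }
  lra.
Qed.

Lemma bounded_by_N x : exists M, forall v, nX v <= x -> forall i, Rabs (v i) <= M.
Proof.
  exists (x / mX). intros v Hv i. pose proof mX_pos.
  eapply Rle_trans; [apply coord_le_s1|]. eapply Rle_trans; [apply s1_le_N|].
  unfold Rdiv. apply Rmult_le_compat_r; auto. left; apply Rinv_0_lt_compat; auto.
Qed.

Lemma Q_cont c v eps : 0 < eps -> exists delta, 0 < delta /\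
  forall w, (forall i, Rabs (v i - w i) < delta) -> Rabs (Qf (vsub c v) - Qf (vsub c w)) < eps.
Proof.
  intros He. set (D := s1 (vsub c v)). pose proof (s1_nonneg (vsub c v)). fold D in H.
  pose proof Bip_nonneg. pose proof (pos_INR n).
  set (L := Bip * INR n * (2 * D + INR n) + 1).
  assert (0 <= Bip * INR n * (2 * D + INR n)) by (apply Rmult_le_pos; [apply Rmult_le_pos|]; lra).
  assert (HL : 0 < L) by (unfold L; lra).
  exists (Rmin 1 (eps / L)). split.
  - apply Rmin_pos; [lra|]. apply Rdiv_lt_0_compat; auto.
  - intros w Hw. apply s1_close in Hw. set (d := Rmin 1 (eps / L)) in Hw.
    assert (Hd1 : d <= 1) by apply Rmin_l. assert (Hd2 : d <= eps / L) by apply Rmin_r.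
    assert (Hd0 : 0 < d) by (apply Rmin_pos; [lra|]; apply Rdiv_lt_0_compat; auto).
    assert (E : Qf (vsub c v) - Qf (vsub c w) = ip (vsub w v) (vadd (vsub c v) (vsub c w))).
    { unfold Qf. rewrite ip_subl, !ip_addr, !ip_subr, !ip_subl. rewrite (ip_sym v c), (ip_sym w c), (ip_sym v w). ring. }
    rewrite E. eapply Rle_lt_trans; [apply ip_bound|].
    rewrite s1_sub_sym.
    assert (Hs : s1 (vadd (vsub c v) (vsub c w)) <= 2 * D + INR n * d).
    { pose proof (s1_add (vsub c v) (vsub c w)) as Ha.
      assert (Ec : vsub c w = vadd (vsub c v) (vsub v w)) by (apply vext; intros; unfold vadd, vsub; ring).
      pose proof (s1_add (vsub c v) (vsub v w)) as Hb. rewrite <- Ec in Hb. fold D in Ha, Hb. lra. }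
    pose proof (s1_nonneg (vsub v w)). pose proof (s1_nonneg (vadd (vsub c v) (vsub c w))).
    assert (Bip * s1 (vsub v w) * s1 (vadd (vsub c v) (vsub c w)) <= Bip * (INR n * d) * (2 * D + INR n)).
    { apply Rmult_le_compat; [nra|auto|apply Rmult_le_compat_l; auto|nra]. }
    assert (Bip * (INR n * d) * (2 * D + INR n) = d * (L - 1)) by (unfold L; ring).
    assert (d * L <= eps).
    { apply Rmult_le_reg_r with (r := / L). apply Rinv_0_lt_compat; auto.
      rewrite Rmult_assoc, Rinv_r by lra. unfold Rdiv in Hd2. lra. }
    nra.
Qed.

Lemma ip_cont v w eps : 0 < eps -> exists delta, 0 < delta /\
  forall w', (forall i, Rabs (w i - w' i) < delta) -> Rabs ((- ip v w) - (- ip v w')) < eps.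
Proof.
  intros He. pose proof Bip_nonneg. pose proof (pos_INR n). pose proof (s1_nonneg v).
  set (L := Bip * s1 v * INR n + 1).
  assert (0 <= Bip * s1 v * INR n) by (apply Rmult_le_pos; [apply Rmult_le_pos|]; lra).
  assert (0 < L) by (unfold L; lra).
  exists (eps / L). split; [apply Rdiv_lt_0_compat; auto|].
  intros w' Hw. apply s1_close in Hw.
  replace ((- ip v w) - (- ip v w')) with (- ip v (vsub w w')) by (rewrite ip_subr; ring).
  rewrite Rabs_Ropp. eapply Rle_lt_trans; [apply ip_bound|].
  assert (Bip * s1 v * s1 (vsub w w') <= Bip * s1 v * (INR n * (eps / L))) by (apply Rmult_le_compat_l; nra).
  assert (Bip * s1 v * (INR n * (eps / L)) = eps * ((L - 1) / L)) by (unfold L; field; lra).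
  assert ((L - 1) / L < 1).
  { apply Rmult_lt_reg_r with (r := L); auto. unfold Rdiv. rewrite Rmult_assoc, Rinv_l by lra. lra. }
  nra.
Qed.

Lemma P_spec c x : 0 <= x -> nX (projX ip nX c x) <= x /\
  forall q, nX q <= x -> norm2 ip (vsub c (projX ip nX c x)) <= norm2 ip (vsub c q).
Proof.
  intros Hx. unfold projX. apply epsilon_spec.
  destruct (EVT (fun q => Qf (vsub c q)) (fun q => nX q <= x)) as [p [Hp Hmin]].
  - exists vzero. rewrite N_zero; auto.
  - apply bounded_by_N.
  - apply closed_N_le.
  - intros; apply Q_cont; auto.
  - exists p. split; auto. intros q Hq. apply norm2_le. apply Hmin; auto.
Qed.

Lemma P_le c x : 0 <= x -> nX (projX ip nX c x) <= x.
Proof. intros Hx; apply (P_spec c x Hx). Qed.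
Lemma P_min c x q : 0 <= x -> nX q <= x -> Qf (vsub c (projX ip nX c x)) <= Qf (vsub c q).
Proof. intros Hx Hq. apply norm2_le_inv. apply (P_spec c x Hx); auto. Qed.

Lemma N_mid p q : nX (vscale (/2) (vadd p q)) <= (nX p + nX q) / 2.
Proof.
  rewrite N_scale_nonneg by lra. pose proof (N_add p q). lra.
Qed.

Lemma P_unique c x q : 0 <= x -> nX q <= x ->
  (forall q', nX q' <= x -> Qf (vsub c q) <= Qf (vsub c q')) -> projX ip nX c x = q.
Proof.
  intros Hx Hq Hmin. set (p := projX ip nX c x).
  pose proof (P_le c x Hx) as Hp. fold p in Hp.
  pose proof (P_min c x q Hx Hq) as H1. fold p in H1.
  pose proof (Hmin p Hp) as H2.
  set (z := vscale (/2) (vadd p q)).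
  assert (Hz : nX z <= x) by (pose proof (N_mid p q); unfold z; lra).
  pose proof (P_min c x z Hx Hz) as H3. fold p in H3.
  assert (Ez : vsub c z = vadd (vscale (/2) (vsub c p)) (vscale (/2) (vsub c q)))
    by (apply vext; intros; unfold z, vsub, vadd, vscale; field).
  rewrite Ez, Q_add, !Q_scale, ip_scalel, ip_scaler in H3.
  assert (Eq : Qf (vsub p q) = Qf (vsub c q) - 2 * ip (vsub c q) (vsub c p) + Qf (vsub c p)).
  { replace (vsub p q) with (vsub (vsub c q) (vsub c p)) by (apply vext; intros; unfold vsub; ring).
    apply Q_sub. }
  rewrite (ip_sym (vsub c q)) in Eq.
  assert (Qf (vsub p q) <= 0) by lra.
  apply Q_eq0 in H. apply vext; intros i.
  assert (vsub p q i = vzero i) by (rewrite H; auto). unfold vsub, vzero in H0. lra.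
Qed.

Lemma P_self c x : 0 <= x -> nX c <= x -> projX ip nX c x = c.
Proof.
  intros Hx Hc. apply P_unique; auto. intros q' _.
  replace (vsub c c) with (@vzero n) by (apply vext; intros; unfold vsub, vzero; ring).
  rewrite Q_zero. apply Q_nonneg.
Qed.

Lemma P_zero c : projX ip nX c 0 = vzero.
Proof.
  pose proof (P_le c 0 (Rle_refl 0)). pose proof (N_nonneg (projX ip nX c 0)).
  apply N_eq0. lra.
Qed.

Lemma N_convex p q t : 0 <= t <= 1 -> nX (vadd (vscale (1 - t) p) (vscale t q)) <= (1 - t) * nX p + t * nX q.
Proof.
  intros Ht. eapply Rle_trans; [apply N_add|]. rewrite !N_scale_nonneg by lra. lra.
Qed.

Lemma VI c x q : 0 <= x -> nX q <= x ->
  ip (vsub c (projX ip nX c x)) (vsub q (projX ip nX c x)) <= 0.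
Proof.
  intros Hx Hq. set (p := projX ip nX c x). set (b := vsub c p). set (d := vsub q p).
  destruct (Rle_lt_dec (ip b d) 0) as [|Hpos]; auto. exfalso.
  pose proof (Q_nonneg d) as Hd.
  set (t := ip b d / (ip b d + Qf d)).
  assert (Ht0 : 0 < t) by (apply Rdiv_lt_0_compat; lra).
  assert (Ht1 : t <= 1) by (unfold t; apply Rmult_le_reg_r with (r := ip b d + Qf d); [lra|]; unfold Rdiv; rewrite Rmult_assoc, Rinv_l by lra; lra).
  assert (Hz : nX (vadd (vscale (1 - t) p) (vscale t q)) <= x).
  { eapply Rle_trans; [apply N_convex; lra|]. pose proof (P_le c x Hx). fold p in H. nra. }
  pose proof (P_min c x _ Hx Hz) as H. fold p in H. fold b in H.
  replace (vsub c (vadd (vscale (1 - t) p) (vscale t q))) with (vsub b (vscale t d)) in H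
    by (apply vext; intros; unfold b, d, vsub, vadd, vscale; ring).
  rewrite Q_sub, Q_scale, ip_scaler in H.
  assert (t * (ip b d + Qf d) = ip b d) by (unfold t; field; lra).
  assert (2 * t * ip b d <= t * t * Qf d) by lra.
  assert (2 * ip b d <= t * Qf d) by (apply Rmult_le_reg_l with (r := t); auto; nra).
  nra.
Qed.

Lemma unit_exists : exists u, nX u = 1.
Proof.
  exists (vscale (/ nX (ebas i0)) (ebas i0)).
  assert (0 < nX (ebas i0)).
  { destruct (N_nonneg (ebas i0)) as [|E]; auto. symmetry in E. apply N_eq0 in E. exfalso; apply ebas_nz; auto. }
  rewrite N_scale_nonneg by (left; apply Rinv_0_lt_compat; auto). field. lra.
Qed.

Lemma Y_spec v : (exists w, nX w = 1 /\ ip v w = dualnorm ip nX v) /\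
  (forall w, nX w = 1 -> ip v w <= dualnorm ip nX v).
Proof.
  unfold dualnorm. apply epsilon_spec.
  destruct (EVT (fun w => - ip v w) (fun w => nX w = 1)) as [a [Ha Hmin]].
  - apply unit_exists.
  - destruct (bounded_by_N 1) as [M HM]. exists M. intros w Hw. apply HM. lra.
  - apply closed_N_eq.
  - intros w eps He. apply (ip_cont v w eps He).
  - exists (ip v a). split.
    + exists a; auto.
    + intros w Hw. specialize (Hmin w Hw). lra.
Qed.

Lemma Y_max v w : nX w = 1 -> ip v w <= dualnorm ip nX v.
Proof. apply Y_spec. Qed.
Lemma Y_att v : exists w, nX w = 1 /\ ip v w = dualnorm ip nX v.
Proof. apply Y_spec. Qed.

Lemma Y_nonneg v : 0 <= dualnorm ip nX v.
Proof.
  destruct unit_exists as [u Hu].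
  pose proof (Y_max v u Hu). pose proof (Y_max v (vscale (-1) u)).
  rewrite N_opp, ip_scaler in H0. specialize (H0 Hu). lra.
Qed.

Lemma CS v w : ip v w <= nX w * dualnorm ip nX v.
Proof.
  destruct (classic (w = vzero)) as [E|E].
  - subst. rewrite ip_zeror, N_zero. lra.
  - assert (0 < nX w).
    { destruct (N_nonneg w) as [|E']; auto. symmetry in E'. apply N_eq0 in E'. contradiction. }
    pose proof (Y_max v (vscale (/ nX w) w)).
    rewrite N_scale_nonneg, ip_scaler in H0 by (left; apply Rinv_0_lt_compat; auto).
    assert (/ nX w * nX w = 1) by (field; lra). specialize (H0 H1).
    apply Rmult_le_compat_l with (r := nX w) in H0; [|lra].
    rewrite <- Rmult_assoc, Rinv_r in H0 by lra. lra.
Qed.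

Lemma Y_tri u v : dualnorm ip nX (vadd u v) <= dualnorm ip nX u + dualnorm ip nX v.
Proof.
  destruct (Y_att (vadd u v)) as [w [Hw E]]. rewrite <- E, ip_addl.
  pose proof (Y_max u w Hw). pose proof (Y_max v w Hw). lra.
Qed.

Notation Yn := (dualnorm ip nX).
Notation P := (projX ip nX).

Lemma align_ge v x : 0 <= x -> x * Yn (vsub v (P v x)) <= ip (vsub v (P v x)) (P v x).
Proof.
  intros Hx. set (p := P v x). set (b := vsub v p).
  destruct (Y_att b) as [u [Hu Eu]].
  assert (Hq : nX (vscale x u) <= x) by (rewrite N_scale_nonneg, Hu by auto; lra).
  pose proof (VI v x _ Hx Hq) as H. fold p b in H.
  rewrite ip_subr, ip_scaler, Eu in H. lra.
Qed.

Lemma Y_slack v x : 0 <= x -> nX (P v x) < x -> Yn (vsub v (P v x)) = 0.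
Proof.
  intros Hx Hlt. pose proof (align_ge v x Hx). pose proof (CS (vsub v (P v x)) (P v x)).
  pose proof (Y_nonneg (vsub v (P v x))).
  assert ((x - nX (P v x)) * Yn (vsub v (P v x)) <= 0) by lra.
  assert (0 < x - nX (P v x)) by lra.
  apply Rle_antisym; auto. nra.
Qed.

Variable c : vec n.
Hypothesis Hc : tight ip nX c.

Lemma tightT s q : 0 <= s -> nX q <= s -> Yn (vsub c (P c s)) <= Yn (vsub c q).
Proof.
  intros Hs Hq. set (a := P c s). set (b := vsub c a).
  pose proof (P_le c s Hs) as Ha. fold a in Ha.
  destruct (Rle_lt_or_eq_dec _ _ Ha) as [Hlt|Heq].
  - unfold b, a. rewrite Y_slack by auto. apply Y_nonneg.
  - assert (HD : is_decomp nX (norm2 ip) c a b).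
    { split.
      - apply vext; intros; unfold b, vadd, vsub; ring.
      - intros a' b' Hab.
        assert (Eb' : b' = vsub c a') by (rewrite <- Hab; apply vext; intros; unfold vsub, vadd; ring).
        destruct (Rlt_le_dec (nX a) (nX a')) as [|Hle]; [left; lra|].
        assert (Ha' : nX a' <= s) by lra.
        pose proof (P_min c s a' Hs Ha') as Hm. fold a b in Hm. rewrite <- Eb' in Hm.
        destruct (Rlt_le_dec (norm2 ip b) (norm2 ip b')) as [|Hle2]; [right; left; lra|].
        apply norm2_le_inv in Hle2.
        assert (Hu : P c s = a').
        { apply P_unique; auto. intros q' Hq'. pose proof (P_min c s q' Hs Hq'). fold a b in H.
          rewrite <- Eb'. lra. }
        fold a in Hu. right; right. subst a'. rewrite Eb'. fold b. split; reflexivity. }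
    destruct (Hc a b HD) as [_ H].
    destruct (H q (vsub c q)) as [H1|[H1|[H1 H2]]].
    + apply vext; intros; unfold vadd, vsub; ring.
    + lra.
    + fold b. lra.
    + fold b. lra.
Qed.

Definition Ff v t := Qf (vsub v (P v t)).
Definition Hf v t := Yn (vsub v (P v t)).

Lemma Fi v t D : 0 <= t -> 0 <= D -> Ff v (t + D) <= Ff v t - 2 * D * Hf v t + D * D * KQ.
Proof.
  intros Ht HD. unfold Ff, Hf. set (p := P v t). set (s := vsub v p).
  destruct (Y_att s) as [u [Hu Eu]].
  set (q := vadd p (vscale D u)).
  assert (Hq : nX q <= t + D).
  { unfold q. eapply Rle_trans; [apply N_add|]. rewrite N_scale_nonneg, Hu by auto.
    pose proof (P_le v t Ht). fold p in H. lra. }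
  pose proof (P_min v (t + D) q ltac:(lra) Hq) as H.
  replace (vsub v q) with (vsub s (vscale D u)) in H by (apply vext; intros; unfold q, s, vsub, vadd, vscale; ring).
  rewrite (Q_sub s (vscale D u)), Q_scale, ip_scaler, Eu in H.
  pose proof (Q_le_N u). rewrite Hu in H0. pose proof KQ_nonneg.
  assert (D * D * Qf u <= D * D * KQ) by (apply Rmult_le_compat_l; nra).
  lra.
Qed.

Lemma Fii v t D : 0 <= t -> 0 <= D -> 0 < t + D -> Ff v t <= Ff v (t + D) + 2 * D * Hf v (t + D) + D * D * KQ.
Proof.
  intros Ht HD HtD. unfold Ff, Hf. set (p := P v (t + D)). set (s := vsub v p).
  set (lam := t / (t + D)).
  assert (Hl0 : 0 <= lam) by (unfold lam; apply Rmult_le_pos; [lra|left; apply Rinv_0_lt_compat; lra]).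
  assert (Hl1 : 1 - lam = D / (t + D)) by (unfold lam; field; lra).
  pose proof (P_le v (t + D) ltac:(lra)) as Hp. fold p in Hp.
  assert (Hq : nX (vscale lam p) <= t).
  { rewrite N_scale_nonneg by auto.
    assert (lam * nX p <= lam * (t + D)) by (apply Rmult_le_compat_l; auto).
    assert (lam * (t + D) = t) by (unfold lam; field; lra). lra. }
  pose proof (P_min v t _ Ht Hq) as H.
  replace (vsub v (vscale lam p)) with (vadd s (vscale (1 - lam) p)) in H
    by (apply vext; intros; unfold s, vsub, vadd, vscale; ring).
  rewrite (Q_add s (vscale (1 - lam) p)), Q_scale, ip_scaler in H.
  pose proof (CS s p) as Hcs. pose proof (Y_nonneg s) as Hy.
  assert (Hip1 : ip s p <= (t + D) * Yn s) by (apply Rle_trans with (nX p * Yn s); auto; apply Rmult_le_compat_r; auto).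
  assert (Hl1' : 0 <= 1 - lam) by (rewrite Hl1; apply Rmult_le_pos; [lra|left; apply Rinv_0_lt_compat; lra]).
  assert (T1 : 2 * ((1 - lam) * ip s p) <= 2 * D * Yn s).
  { assert ((1 - lam) * ip s p <= (1 - lam) * ((t + D) * Yn s)) by (apply Rmult_le_compat_l; auto).
    assert ((1 - lam) * ((t + D) * Yn s) = D * Yn s) by (rewrite Hl1; field; lra). lra. }
  pose proof (Q_le_N p) as HQp. pose proof KQ_nonneg. pose proof (N_nonneg p).
  assert (T2 : (1 - lam) * (1 - lam) * Qf p <= D * D * KQ).
  { assert (Qf p <= KQ * ((t + D) * (t + D))).
    { eapply Rle_trans; [apply HQp|]. apply Rmult_le_compat_l; auto. apply Rmult_le_compat; lra. }
    assert ((1 - lam) * (1 - lam) * Qf p <= (1 - lam) * (1 - lam) * (KQ * ((t + D) * (t + D))))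
      by (apply Rmult_le_compat_l; nra).
    assert ((1 - lam) * (1 - lam) * (KQ * ((t + D) * (t + D))) = D * D * KQ) by (rewrite Hl1; field; lra).
    lra. }
  lra.
Qed.

Lemma telescope (u : nat -> R) E N : (forall k, (k < N)%nat -> u k - u (S k) <= E) -> u 0%nat - u N <= INR N * E.
Proof.
  induction N; intros H.
  - simpl. lra.
  - rewrite S_INR. assert (u 0%nat - u N <= INR N * E) by (apply IHN; intros; apply H; lia).
    specialize (H N ltac:(lia)). lra.
Qed.

Lemma arch_le a b C : (forall N : nat, (0 < N)%nat -> a <= b + C / INR N) -> a <= b.
Proof.
  intros H. destruct (Rle_lt_dec a b) as [|Hab]; auto. exfalso.
  destruct (Rle_lt_dec C 0) as [HC|HC].
  - specialize (H 1%nat ltac:(lia)). simpl in H. unfold Rdiv in H. rewrite Rinv_1 in H. lra.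
  - destruct (archimed_cor1 ((a - b) / C)) as [N [HN1 HN2]].
    + apply Rdiv_lt_0_compat; lra.
    + specialize (H N HN2). assert (0 < INR N) by (apply lt_0_INR; auto).
      assert (C * / INR N < C * ((a - b) / C)) by (apply Rmult_lt_compat_l; auto).
      assert (C * ((a - b) / C) = a - b) by (field; lra).
      unfold Rdiv in H. lra.
Qed.

Lemma part2 x1 y : 0 <= x1 -> 0 <= y -> shrinkX ip nX (shrinkX ip nX c x1) y = shrinkX ip nX c (x1 + y).
Proof.
  intros Hx1 Hy. unfold shrinkX.
  set (a1 := P c x1). set (b1 := vsub c a1). set (p := P b1 y).
  destruct (Rle_lt_or_eq_dec _ _ Hy) as [Hy0|Hy0].
  2:{ subst y. unfold p. rewrite P_zero, Rplus_0_r. fold a1. apply vext; intros; unfold b1, vsub, vzero; ring. }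
  assert (Key : Qf (vsub b1 p) <= Ff c (x1 + y)).
  { apply (arch_le _ _ (2 * KQ * (y * y))). intros N HN.
    assert (HNp : 0 < INR N) by (apply lt_0_INR; auto).
    set (D := y / INR N). assert (HD : 0 < D) by (apply Rdiv_lt_0_compat; auto).
    pose proof KQ_nonneg as HK.
    pose proof (telescope (fun k => Ff c (x1 + INR k * D) - Ff b1 (INR k * D)) (2 * D * D * KQ) N) as T.
    cbv beta in T.
    assert (Hstep : forall k, (k < N)%nat ->
      Ff c (x1 + INR k * D) - Ff b1 (INR k * D) - (Ff c (x1 + INR (S k) * D) - Ff b1 (INR (S k) * D)) <= 2 * D * D * KQ).
    { intros k _. rewrite S_INR. set (t := INR k * D).
      assert (Ht : 0 <= t) by (unfold t; apply Rmult_le_pos; [apply pos_INR|lra]).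
      replace ((INR k + 1) * D) with (t + D) by (unfold t; ring).
      replace (x1 + (t + D)) with ((x1 + t) + D) by ring.
      pose proof (Fii c (x1 + t) D ltac:(lra) ltac:(lra) ltac:(lra)) as H1.
      pose proof (Fi b1 t D Ht ltac:(lra)) as H2.
      assert (H3 : Hf c (x1 + t + D) <= Hf b1 t).
      { unfold Hf. replace (vsub b1 (P b1 t)) with (vsub c (vadd a1 (P b1 t)))
          by (apply vext; intros; unfold b1, vsub, vadd; ring).
        apply tightT; [lra|]. eapply Rle_trans; [apply N_add|].
        pose proof (P_le c x1 Hx1). pose proof (P_le b1 t Ht). fold a1 in H. lra. }
      assert (2 * D * Hf c (x1 + t + D) <= 2 * D * Hf b1 t) by (apply Rmult_le_compat_l; lra).
      lra. }
    specialize (T Hstep).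
    replace (INR 0 * D) with 0 in T by (simpl; ring).
    replace (INR N * D) with y in T by (unfold D; field; lra).
    rewrite Rplus_0_r in T.
    assert (E0 : Ff b1 0 = Ff c x1).
    { unfold Ff. rewrite P_zero. fold a1 b1. f_equal. apply vext; intros; unfold vsub, vzero; ring. }
    assert (E1 : INR N * (2 * D * D * KQ) = 2 * KQ * (y * y) / INR N) by (unfold D; field; lra).
    assert (E2 : Ff b1 y = Qf (vsub b1 p)) by reflexivity. lra. }
  assert (HPu : P c (x1 + y) = vadd a1 p).
  { apply P_unique; [lra| |].
    - eapply Rle_trans; [apply N_add|]. pose proof (P_le c x1 Hx1). pose proof (P_le b1 y Hy). fold a1 in H. fold p in H0. lra.
    - intros q' Hq'. replace (vsub c (vadd a1 p)) with (vsub b1 p) by (apply vext; intros; unfold b1, vsub, vadd; ring).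
      pose proof (P_min c (x1 + y) q' ltac:(lra) Hq'). unfold Ff in Key. lra. }
  rewrite HPu. apply vext; intros; unfold b1, vsub, vadd; ring.
Qed.

Lemma part1 x1 x2 : 0 <= x1 -> 0 <= x2 -> P (P c x1) x2 = P c (Rmin x1 x2).
Proof.
  intros Hx1 Hx2. destruct (Rle_lt_dec x1 x2) as [Hle|Hlt].
  - rewrite Rmin_left by auto. apply P_self; auto. pose proof (P_le c x1 Hx1). lra.
  - rewrite Rmin_right by lra.
    set (a1 := P c x1). set (b1 := vsub c a1). set (a2 := P c x2). set (h1 := Yn b1).
    set (y := x1 - x2). assert (Hy : 0 < y) by (unfold y; lra).
    assert (Key : Qf (vsub a1 a2) <= Ff a1 x2).
    { apply (arch_le _ _ (2 * KQ * (y * y))). intros N HN.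
      assert (HNp : 0 < INR N) by (apply lt_0_INR; auto).
      set (D := y / INR N). assert (HD : 0 < D) by (apply Rdiv_lt_0_compat; auto).
      pose proof KQ_nonneg as HK.
      pose proof (telescope (fun k => Ff c (x2 + INR k * D) - Ff a1 (x2 + INR k * D) + 2 * (x2 + INR k * D) * h1) (2 * D * D * KQ) N) as T.
      cbv beta in T.
      assert (Hstep : forall k, (k < N)%nat ->
        Ff c (x2 + INR k * D) - Ff a1 (x2 + INR k * D) + 2 * (x2 + INR k * D) * h1
        - (Ff c (x2 + INR (S k) * D) - Ff a1 (x2 + INR (S k) * D) + 2 * (x2 + INR (S k) * D) * h1) <= 2 * D * D * KQ).
      { intros k _. rewrite S_INR. set (t := x2 + INR k * D).
        assert (Ht : 0 <= t) by (unfold t; pose proof (pos_INR k); nra).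
        replace (x2 + (INR k + 1) * D) with (t + D) by (unfold t; ring).
        pose proof (Fii c t D Ht ltac:(lra) ltac:(lra)) as H1.
        pose proof (Fi a1 t D Ht ltac:(lra)) as H2.
        assert (H3 : Hf c (t + D) <= h1 + Hf a1 t).
        { unfold Hf. eapply Rle_trans.
          - apply (tightT (t + D) (P a1 t)); [lra|]. pose proof (P_le a1 t Ht). lra.
          - replace (vsub c (P a1 t)) with (vadd b1 (vsub a1 (P a1 t)))
              by (apply vext; intros; unfold b1, vsub, vadd; ring).
            apply Y_tri. }
        assert (2 * D * Hf c (t + D) <= 2 * D * (h1 + Hf a1 t)) by (apply Rmult_le_compat_l; lra).
        lra. }
      specialize (T Hstep).
      replace (INR 0 * D) with 0 in T by (simpl; ring).
      replace (x2 + INR N * D) with x1 in T by (unfold D, y; field; lra).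
      rewrite Rplus_0_r in T.
      assert (E0 : Ff a1 x1 = 0).
      { unfold Ff. rewrite P_self; [|auto|apply P_le; auto].
        replace (vsub a1 a1) with (@vzero n) by (apply vext; intros; unfold vsub, vzero; ring). apply Q_zero. }
      assert (E1 : INR N * (2 * D * D * KQ) = 2 * KQ * (y * y) / INR N) by (unfold D; field; lra).
      assert (LB : Qf (vsub a1 a2) <= Ff c x2 - Ff c x1 - 2 * y * h1).
      { unfold Ff. fold a1 a2 b1.
        replace (vsub c a2) with (vadd b1 (vsub a1 a2)) by (apply vext; intros; unfold b1, vsub, vadd; ring).
        rewrite Q_add, ip_subr.
        pose proof (align_ge c x1 Hx1) as A1. fold a1 b1 h1 in A1.
        pose proof (CS b1 a2) as A2. fold h1 in A2.
        pose proof (P_le c x2 Hx2) as A3. fold a2 in A3.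
        pose proof (Y_nonneg b1) as A4. fold h1 in A4.
        assert (nX a2 * h1 <= x2 * h1) by (apply Rmult_le_compat_r; auto).
        unfold y. lra. }
      unfold y in LB. lra. }
    apply P_unique; auto.
    + apply P_le; auto.
    + intros q' Hq'. pose proof (P_min a1 x2 q' Hx2 Hq'). unfold Ff in Key. lra.
Qed.

End Geo.

Set Warnings "-notation-overridden,-ambiguous-paths,-notation-incompatible-prefix".
From mathcomp Require Import all_boot all_order all_algebra.
From mathcomp Require Import all_classical all_reals.
From mathcomp Require Import topology normedtype derive.
From mathcomp Require Import Rstruct Rstruct_topology.
Import Order.TTheory GRing.Theory Num.Theory numFieldNormedType.Exports.
Set Implicit Arguments. Unset Strict Implicit. Unset Printing Implicit Defensive.

Section EVT.
Local Open Scope ring_scope.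
Local Open Scope classical_set_scope.
Variable n : nat.
Definition fin_to_ord (j : Fin.t n) : 'I_n := Ordinal (introT ssrnat.ltP (proj2_sig (Fin.to_nat j))).
Definition ord_to_fin (i : 'I_n) : Fin.t n := Fin.of_nat_lt (elimT ssrnat.ltP (ltn_ord i)).
Lemma ord_fin_ord i : fin_to_ord (ord_to_fin i) = i.
Proof. apply/val_inj => /=. by rewrite /ord_to_fin Fin.to_nat_of_nat. Qed.
Lemma fin_ord_fin j : ord_to_fin (fin_to_ord j) = j.
Proof. rewrite /ord_to_fin /fin_to_ord /=.
set H := elimT _ _.
have -> : H = proj2_sig (Fin.to_nat j) by apply: Classical_Prop.proof_irrelevance.
exact: Fin.of_nat_to_nat_inv. Qed.

Definition to_rV (v : Fin.t n -> R) : 'rV[R]_n := \row_(i < n) v (ord_to_fin i).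
Definition of_rV (r : 'rV[R]_n) : Fin.t n -> R := fun j => r ord0 (fin_to_ord j).
Lemma of_to_rV v : of_rV (to_rV v) = v.
Proof. apply: functional_extensionality => j. by rewrite /of_rV /to_rV mxE fin_ord_fin. Qed.

Lemma entry_le_norm (r : 'rV[R]_n) i j : `|r i j| <= `|r|.
Proof. have -> : `|r| = mx_norm r by []. by rewrite mx_normrE; apply/bigmax_geP; right => /=; exists (i, j). Qed.

Lemma EVT_vec (f : (Fin.t n -> R) -> R) (A : (Fin.t n -> R) -> Prop) :
  (exists a, A a) ->
  (exists M, forall v, A v -> forall i, Rle (Rabs (v i)) M) ->
  (forall v, (forall eps, Rlt 0 eps -> exists w, A w /\ forall i, Rlt (Rabs (Rminus (v i) (w i))) eps) -> A v) ->
  (forall v eps, Rlt 0 eps -> exists delta, Rlt 0 delta /\ forall w, (forall i, Rlt (Rabs (Rminus (v i) (w i))) delta) -> Rlt (Rabs (Rminus (f v) (f w))) eps) ->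
  exists a, A a /\ forall v, A v -> Rle (f a) (f v).
Proof.
move=> [a Aa] [M HM] Hcl Hco.
pose A' := [set r : 'rV[R]_n | A (of_rV r)].
pose f' := fun r => f (of_rV r).
have A0 : A' !=set0 by exists (to_rV a); rewrite /A' /= of_to_rV.
have cA : compact A'.
  apply: bounded_closed_compact.
  - rewrite /bounded_set /bounded_near /=. near=> M'. move=> r Ar.
    have nr : `|r| = mx_norm r by [].
    rewrite nr.
    have [r0|] := eqVneq (mx_norm r) 0.
      rewrite r0. near: M'. by apply: nbhs_pinfty_ge.
    move/mx_norm_neq0 => [[i j] /= ->].
    have -> : i = ord0 by apply: ord1.
    have -> : j = fin_to_ord (ord_to_fin j) by rewrite ord_fin_ord.
    apply: (le_trans (y := M)); first by apply/RleP; exact: (HM _ Ar (ord_to_fin j)).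
    near: M'. apply: nbhs_pinfty_ge. exact: num_real.
  - move=> r clr. apply: Hcl => e e0.
    have e0' : (0 < e)%R by apply/RltP.
    have [w [Aw brw]] := clr (ball r e) (nbhsx_ballx r e e0').
    exists (of_rV w); split => // i.
    apply/RltP. rewrite mx_norm_ball /ball_ /= in brw.
    apply: (le_lt_trans _ brw).
    have := entry_le_norm (r - w) ord0 (fin_to_ord i). by rewrite !mxE.
have cf : {within A', continuous f'}.
  apply: continuous_subspaceT.
  have H : forall r : 'rV[R]_n, continuous_at r f'; last by exact: H.
  move=> r. apply/(@cvgrPdist_lt R R^o _ (nbhs r) (nbhs_filter r) f' (f' r)) => e e0.
  have e0' : Rlt 0 e by apply/RltP.
  have [d [d0 Hd]] := Hco (of_rV r) e e0'.
  apply/nbhs_ballP. exists d; first by apply/RltP.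
  move=> w brw /=. apply/RltP. apply: Hd => i.
  apply/RltP. rewrite mx_norm_ball /ball_ /= in brw.
  apply: (le_lt_trans _ brw).
  have := entry_le_norm (r - w) ord0 (fin_to_ord i). by rewrite !mxE.
have [c cA' cmin] := EVT_min_rV A0 cA cf.
exists (of_rV c); split; first by rewrite inE in cA'.
move=> v Av. have := cmin (to_rV v). rewrite /f' of_to_rV. move=> H. apply/RleP. apply: H.
by rewrite inE /A' /= of_to_rV.
Unshelve. all: by end_near.
Qed.
End EVT.

Unset Implicit Arguments.
Open Scope R_scope.

Theorem proposition2p11 (n : nat) (ip : vec n -> vec n -> R) (nX : vec n -> R)
  (Hip : is_inner_product ip) (HX : is_norm nX)
  (c : vec n) (Hc : tight ip nX c) (x1 x2 : R) (Hx1 : 0 <= x1) (Hx2 : 0 <= x2) :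
  projX ip nX (projX ip nX c x1) x2 = projX ip nX c (Rmin x1 x2) /\
  shrinkX ip nX (shrinkX ip nX c x1) x2 = shrinkX ip nX c (x1 + x2).
Proof.
  destruct n as [|k].
  - split; apply vec0_eq.
  - split.
    + exact (part1 (S k) ip nX Hip HX (EVT_vec (n:=S k)) Fin.F1 c Hc x1 x2 Hx1 Hx2).
    + exact (part2 (S k) ip nX Hip HX (EVT_vec (n:=S k)) Fin.F1 c Hc x1 x2 Hx1 Hx2).
Qed.
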